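(* Let $Q=\mathrm{diag}(q_1,\dots,q_n)$ with $q_i>0$, $C(u)=\frac12u^TQu$, $P^l\in\mathbb{R}^n$, and suppose there exist $\overline\eta\in\mathcal{R}(D^T)$, $\overline V\in\mathbb{R}^n_{>0}$ and $\overline E_{fd}\in\mathbb{R}^n$ with \[ \Big(Q^{-1}\frac{\mathbf{1}_n\mathbf{1}_n^T}{\mathbf{1}_n^TQ^{-1}\mathbf{1}_n}-I_n\Big)P^l=D\Gamma(\overline V)\boldsymbol{\sin}(\overline\eta),\qquad \mathbf{0}=-E(\overline\eta)\overline V+\overline E_{fd}. \] Then the (unique) minimizer $\overline u$ of $\min_u C(u)$ subject to $\mathbf{1}_n^T(u-P^l)=0$ coincides with the $u$-component $\overline u'$ of a minimizer of \[ \min_{u,\eta}C(u)\quad\text{subject to}\quad \mathbf{0}=u-D\Gamma(\overline V)\boldsymbol{\sin}(\eta)-P^l,\ \ \eta\in\mathcal{R}(D^T). \]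
   Context: Standing setup (power network model). $\mathcal{G}=(\mathcal{V},\mathcal{E})$ is a connected undirected graph with node set $\{1,\dots,n\}$ and $m$ edges; each edge $k=\{i,j\}$ is given an arbitrary orientation, and $D\in\mathbb{R}^{n\times m}$ is the incidence matrix: $d_{ik}=+1$ if $i$ is the positive end of edge $k$, $-1$ if $i$ is the negative end, $0$ otherwise. $\mathbf{1}_n$ is the all-ones vector. For each edge $k=\{i,j\}$ there is a susceptance $B_{ij}=B_{ji}>0$; each node has a self-susceptance $B_{ii}<0$ with $|B_{ii}|>\sum_{j\in\mathcal{N}_i}|B_{ij}|$, and reactances $X_{di}>X'_{di}>0$. For $V\in\mathbb{R}^n$, $\Gamma(V)=\mathrm{diag}(\gamma_1,\dots,\gamma_m)$ with $\gamma_k=V_iV_jB_{ij}$ for edge $k=\{i,j\}$. For $\eta\in\mathbb{R}^m$, $E(\eta)\in\mathbb{R}^{n\times n}$ is the symmetric matrix with $E_{ii}=\frac{1-B_{ii}(X_{di}-X'_{di})}{X_{di}-X'_{di}}$, $E_{ij}=-B_{ij}\cos(\eta_k)$ if $k=\{i,j\}$ is an edge, and $E_{ij}=0$ otherwise. $\boldsymbol{\sin}$ acts componentwise. *)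

(* Defs.v *)
(* real numbers with sin/cos. Vectors are functions nat -> R,
   only indices 0..n-1 (nodes) resp. 0..m-1 (edges) are meaningful. *)
From Stdlib Require Import Reals List Arith Bool.
Import ListNotations.
Open Scope R_scope.

Fixpoint rsum (n : nat) (f : nat -> R) : R :=
  match n with
  | O => 0
  | S p => rsum p f + f p
  end.

(* An oriented graph: edge k is the pair (positive end, negative end). *)
Definition edge (edges : list (nat * nat)) (k : nat) : nat * nat :=
  nth k edges (0%nat, 0%nat).

Definition incD (edges : list (nat * nat)) (i k : nat) : R :=
  let (a, b) := edge edges k in
  if Nat.eqb a i then 1 else if Nat.eqb b i then -1 else 0.

Definition adjb (edges : list (nat * nat)) (i j : nat) : bool :=
  existsb (fun e => orb (Nat.eqb (fst e) i && Nat.eqb (snd e) j)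
                    (Nat.eqb (fst e) j && Nat.eqb (snd e) i)) edges.

Inductive reach (edges : list (nat * nat)) : nat -> nat -> Prop :=
| reach_refl : forall i, reach edges i i
| reach_step : forall i j k, reach edges i j -> adjb edges j k = true ->
                             reach edges i k.

(* G = ({0..n-1}, edges) is a connected simple undirected graph,
   each edge carrying an arbitrary orientation. *)
Definition wf_graph (n : nat) (edges : list (nat * nat)) : Prop :=
  (0 < n)%nat /\
  (forall k, (k < length edges)%nat ->
     (fst (edge edges k) < n)%nat /\ (snd (edge edges k) < n)%nat /\
     fst (edge edges k) <> snd (edge edges k)) /\
  (forall k l, (k < length edges)%nat -> (l < length edges)%nat -> k <> l ->
     ~ (edge edges k = edge edges l \/
        edge edges k = (snd (edge edges l), fst (edge edges l)))) /\
  (forall i j, (i < n)%nat -> (j < n)%nat -> reach edges i j).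

Definition network_params (n : nat) (edges : list (nat * nat))
  (B : nat -> nat -> R) (Xd Xd' : nat -> R) : Prop :=
  (forall i j, B i j = B j i) /\
  (forall k, (k < length edges)%nat ->
     B (fst (edge edges k)) (snd (edge edges k)) > 0) /\
  (forall i, (i < n)%nat ->
     B i i < 0 /\
     Rabs (B i i) > rsum n (fun j => if adjb edges i j then Rabs (B i j) else 0)) /\
  (forall i, (i < n)%nat -> Xd i > Xd' i /\ Xd' i > 0).

Definition gammaV (edges : list (nat * nat)) (B : nat -> nat -> R)
  (V : nat -> R) (k : nat) : R :=
  let (a, b) := edge edges k in V a * V b * B a b.

Definition DGsin (edges : list (nat * nat)) (B : nat -> nat -> R)
  (V eta : nat -> R) (i : nat) : R :=
  rsum (length edges) (fun k => incD edges i k * gammaV edges B V k * sin (eta k)).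

Definition Ediag (B : nat -> nat -> R) (Xd Xd' : nat -> R) (i : nat) : R :=
  (1 - B i i * (Xd i - Xd' i)) / (Xd i - Xd' i).

Definition EV (edges : list (nat * nat)) (B : nat -> nat -> R) (Xd Xd' : nat -> R)
  (eta V : nat -> R) (i : nat) : R :=
  Ediag B Xd Xd' i * V i +
  rsum (length edges) (fun k =>
    let (a, b) := edge edges k in
    if Nat.eqb a i then - B a b * cos (eta k) * V b
    else if Nat.eqb b i then - B a b * cos (eta k) * V a
    else 0).

Definition in_range_DT (n : nat) (edges : list (nat * nat)) (eta : nat -> R) : Prop :=
  exists x : nat -> R, forall k, (k < length edges)%nat ->
    eta k = rsum n (fun i => incD edges i k * x i).

Definition cost (n : nat) (q u : nat -> R) : R :=
  / 2 * rsum n (fun i => q i * u i * u i).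

Definition redistr (n : nat) (q P : nat -> R) (i : nat) : R :=
  / q i * rsum n P / rsum n (fun j => / q j) - P i.

Definition feas1 (n : nat) (P u : nat -> R) : Prop :=
  rsum n (fun i => u i - P i) = 0.
Definition minimizer1 (n : nat) (q P u : nat -> R) : Prop :=
  feas1 n P u /\ forall u', feas1 n P u' -> cost n q u <= cost n q u'.

Definition feas2 (n : nat) (edges : list (nat * nat)) (B : nat -> nat -> R)
  (Vb P u eta : nat -> R) : Prop :=
  (forall i, (i < n)%nat -> 0 = u i - DGsin edges B Vb eta i - P i) /\
  in_range_DT n edges eta.
Definition minimizer2 (n : nat) (edges : list (nat * nat)) (B : nat -> nat -> R)
  (q Vb P u eta : nat -> R) : Prop :=
  feas2 n edges B Vb P u eta /\
  forall u' eta', feas2 n edges B Vb P u' eta' -> cost n q u <= cost n q u'.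

(* Main.v *)
Require Import Defs.
From Stdlib Require Import Reals List Arith.
From Stdlib Require Import Lra Lia.
Open Scope R_scope.

Lemma rsum_ext n f g : (forall i, (i < n)%nat -> f i = g i) -> rsum n f = rsum n g.
Proof. induction n; simpl; intros H; auto. rewrite IHn by (intros; apply H; lia). rewrite H by lia. auto. Qed.

Lemma rsum_plus n f g : rsum n (fun i => f i + g i) = rsum n f + rsum n g.
Proof. induction n; simpl; [lra|]. rewrite IHn. lra. Qed.

Lemma rsum_minus n f g : rsum n (fun i => f i - g i) = rsum n f - rsum n g.
Proof. induction n; simpl; [lra|]. rewrite IHn. lra. Qed.

Lemma rsum_scal n c f : rsum n (fun i => c * f i) = c * rsum n f.
Proof. induction n; simpl; [lra|]. rewrite IHn. lra. Qed.

Lemma rsum_scal_r n c f : rsum n (fun i => f i * c) = rsum n f * c.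
Proof. induction n; simpl; [lra|]. rewrite IHn. lra. Qed.

Lemma rsum_zero0 n : rsum n (fun _ => 0) = 0.
Proof. induction n; simpl; [lra|]. rewrite IHn. lra. Qed.

Lemma rsum_nonneg n f : (forall i, (i < n)%nat -> 0 <= f i) -> 0 <= rsum n f.
Proof. induction n; simpl; intros H; [lra|]. assert (0 <= rsum n f) by (apply IHn; intros; apply H; lia).
  assert (0 <= f n) by (apply H; lia). lra. Qed.

Lemma rsum_zero_nonneg n f : (forall i, (i < n)%nat -> 0 <= f i) -> rsum n f <= 0 ->
  forall i, (i < n)%nat -> f i = 0.
Proof. induction n; simpl; intros H Hs i Hi; [lia|].
  assert (0 <= rsum n f) by (apply rsum_nonneg; intros; apply H; lia).
  assert (0 <= f n) by (apply H; lia).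
  destruct (Nat.eq_dec i n) as [->|Hne]; [lra|].
  apply IHn; [intros; apply H; lia| lra | lia]. Qed.

Lemma rsum_swap n m (f : nat -> nat -> R) :
  rsum n (fun i => rsum m (fun k => f i k)) = rsum m (fun k => rsum n (fun i => f i k)).
Proof. induction n; simpl. - symmetry; apply rsum_zero0.
  - rewrite IHn. rewrite <- rsum_plus. reflexivity. Qed.

Lemma rsum_ind n a : rsum n (fun i => if Nat.eqb a i then 1 else 0) = if Nat.ltb a n then 1 else 0.
Proof. induction n; simpl. - destruct a; reflexivity.
  - rewrite IHn. destruct (Nat.eqb_spec a n); destruct (Nat.ltb_spec a n); destruct (Nat.ltb_spec a (S n)); lia || lra. Qed.

Lemma sum_DGsin n edges B V eta : wf_graph n edges ->
  rsum n (fun i => DGsin edges B V eta i) = 0.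
Proof. intros Hg. unfold DGsin. rewrite rsum_swap.
  rewrite <- (rsum_zero0 (length edges)). apply rsum_ext. intros k Hk.
  rewrite (rsum_ext _ _ (fun i => incD edges i k * (gammaV edges B V k * sin (eta k))))
    by (intros; ring).
  rewrite rsum_scal_r.
  destruct Hg as [_ [Hg _]]. destruct (Hg k Hk) as [Ha [Hb Hab]].
  unfold incD. revert Ha Hb Hab. destruct (edge edges k) as [a b]. simpl. intros Ha Hb Hab.
  rewrite (rsum_ext _ _ (fun i => (if Nat.eqb a i then 1 else 0) - (if Nat.eqb b i then 1 else 0))).
  - rewrite rsum_minus, !rsum_ind.
    destruct (Nat.ltb_spec a n); destruct (Nat.ltb_spec b n); try lia. ring.
  - intros i _. destruct (Nat.eqb_spec a i); destruct (Nat.eqb_spec b i); subst; try lia; lra.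
Qed.

Lemma sqpos a x : 0 < a -> 0 <= a * x * x.
Proof. intros. rewrite Rmult_assoc. apply Rmult_le_pos; [lra|]. apply Rle_0_sqr. Qed.

Theorem lemma4 (n : nat) (edges : list (nat * nat))
  (B : nat -> nat -> R) (Xd Xd' : nat -> R) (q P : nat -> R)
  (Hg : wf_graph n edges) (Hp : network_params n edges B Xd Xd')
  (Hq : forall i, (i < n)%nat -> q i > 0)
  (etab Vb Efd : nat -> R)
  (Heta : in_range_DT n edges etab)
  (HV : forall i, (i < n)%nat -> Vb i > 0)
  (H1 : forall i, (i < n)%nat -> redistr n q P i = DGsin edges B Vb etab i)
  (H2 : forall i, (i < n)%nat -> 0 = - EV edges B Xd Xd' etab Vb i + Efd i) :
  forall ub : nat -> R, minimizer1 n q P ub ->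
    (exists eta, minimizer2 n edges B q Vb P ub eta) /\
    (forall u' eta', minimizer2 n edges B q Vb P u' eta' ->
       forall i, (i < n)%nat -> u' i = ub i).
Proof.
  intros ub [Hf1 Hm1].
  set (us := fun i => redistr n q P i + P i).
  set (c := rsum n P / rsum n (fun j => / q j)).
  assert (Hqu : forall i, (i < n)%nat -> q i * us i = c).
  { assert (Hden : 0 < rsum n (fun j => / q j)).
    { destruct Hg as [Hn _]. destruct n; [lia|]. simpl.
      assert (0 <= rsum n (fun j => / q j)) by (apply rsum_nonneg; intros; left; apply Rinv_0_lt_compat, Hq; lia).
      assert (0 < / q n) by (apply Rinv_0_lt_compat, Hq; lia). lra. }
    intros i Hi. unfold us, redistr, c. specialize (Hq i Hi). field. lra. }
  assert (Hsus : rsum n (fun i => us i - P i) = 0).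
  { unfold us. rewrite (rsum_ext _ _ (fun i => DGsin edges B Vb etab i)).
    - apply sum_DGsin; auto.
    - intros i Hi. rewrite <- H1 by auto. ring. }
  assert (Hid : forall u, feas1 n P u ->
     cost n q u = cost n q us + / 2 * rsum n (fun i => q i * (u i - us i) * (u i - us i))).
  { intros u Hu. unfold cost.
    rewrite (rsum_ext _ _ (fun i => (q i * us i * us i + q i * (u i - us i) * (u i - us i))
                                    + 2 * c * ((u i - P i) - (us i - P i)))).
    - rewrite rsum_plus, rsum_plus, rsum_scal, rsum_minus. unfold feas1 in Hu.
      rewrite Hu, Hsus. ring.
    - intros i Hi. rewrite <- (Hqu i Hi). ring. }
  assert (Hpos : forall u, 0 <= rsum n (fun i => q i * (u i - us i) * (u i - us i))).
  { intros u. apply rsum_nonneg. intros i Hi. specialize (Hq i Hi).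
    apply sqpos; lra. }
  assert (Huniq : forall u, feas1 n P u -> cost n q u <= cost n q us ->
                  forall i, (i < n)%nat -> u i = us i).
  { intros u Hu Hc i Hi. rewrite (Hid u Hu) in Hc.
    assert (Hz := rsum_zero_nonneg n (fun i => q i * (u i - us i) * (u i - us i))).
    assert (Hs: rsum n (fun i => q i * (u i - us i) * (u i - us i)) <= 0) by lra.
    assert (E : q i * (u i - us i) * (u i - us i) = 0).
    { apply Hz; auto. intros j Hj. specialize (Hq j Hj).
      apply sqpos; lra. }
    specialize (Hq i Hi).
    assert ((u i - us i) * (u i - us i) = 0).
    { apply Rmult_eq_reg_l with (q i); [|lra]. lra. }
    nra. }
  assert (Hus1 : feas1 n P us) by exact Hsus.
  assert (Hub : forall i, (i < n)%nat -> ub i = us i).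
  { apply Huniq; auto. }
  assert (Hcub : cost n q ub = cost n q us).
  { unfold cost. f_equal. apply rsum_ext. intros i Hi. rewrite Hub; auto. }
  assert (F21 : forall u eta, feas2 n edges B Vb P u eta -> feas1 n P u).
  { intros u eta [Hu _]. unfold feas1.
    rewrite (rsum_ext _ _ (fun i => DGsin edges B Vb eta i)).
    - apply sum_DGsin; auto.
    - intros i Hi. specialize (Hu i Hi). lra. }
  assert (Hf2 : feas2 n edges B Vb P ub etab).
  { split; auto. intros i Hi. rewrite Hub by auto. unfold us. rewrite H1 by auto. ring. }
  split.
  - exists etab. split; auto. intros u' eta' H'. rewrite Hcub.
    rewrite (Hid u' (F21 _ _ H')). specialize (Hpos u'). lra.
  - intros u' eta' [H' Hm'] i Hi. rewrite Hub by auto.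
    apply Huniq; auto. eapply F21; eauto. rewrite <- Hcub. apply (Hm' ub etab); auto.
Qed.
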